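(* Let $\mathcal{S}\subset\mathbb{R}^n$ be compact convex with $\|x\|\le D$ for all $x\in\mathcal{S}$, and let $f_1,\dots,f_T:\mathcal{S}\to\mathbb{R}$ be differentiable and $\ell$-strongly convex with $\|\nabla f_t(x)\|\le G$ on $\mathcal{S}$. Let $\gamma\in(0,1)$, $\theta_1\in\mathcal{S}$ and $$\theta_{t+1}=\operatorname{argmin}_{\theta\in\mathcal{S}}\|\theta-(\theta_t-\eta_t\nabla f_t(\theta_t))\|^2,\qquad\eta_t=\frac{1-\gamma}{\ell(1-\gamma^t)}.$$ Then for all $z_1,\dots,z_T\in\mathcal{S}$ with $\sum_{t=2}^T\|z_t-z_{t-1}\|\le V$, $$\sum_{t=1}^T\big(f_t(\theta_t)-f_t(z_t)\big)\le\frac{2D\ell}{1-\gamma}V+\frac{G^2}{2}\sum_{t=1}^T\eta_t.$$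
   Context: $\ell$-strongly convex: $f(y)\ge f(x)+\nabla f(x)^\top(y-x)+\frac\ell2\|x-y\|^2$ for all $x,y\in\mathcal{S}$. *)

(* Defs.v *)
From HB Require Import structures.
From mathcomp Require Import all_boot all_order all_algebra.
From mathcomp Require Import all_classical all_reals all_analysis.
Set Implicit Arguments. Unset Strict Implicit. Unset Printing Implicit Defensive.
Import Order.TTheory GRing.Theory Num.Theory.
Import numFieldNormedType.Exports.
Local Open Scope classical_set_scope.
Local Open Scope ring_scope.

Definition dotv {R : realType} {n : nat} (u v : 'rV[R]_n) : R :=
  \sum_(i < n) u ord0 i * v ord0 i.

Definition enorm {R : realType} {n : nat} (u : 'rV[R]_n) : R :=
  Num.sqrt (dotv u u).

Definition grad {R : realType} {n : nat} (f : 'rV[R]_n -> R) (x : 'rV[R]_n)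
  : 'rV[R]_n := \row_(i < n) ('d f x (delta_mx ord0 i : 'rV[R]_n)).

Definition convex_set_rV {R : realType} {n : nat} (S : set 'rV[R]_n) : Prop :=
  forall x y (a : R), S x -> S y -> 0 <= a <= 1 -> S (a *: x + (1 - a) *: y).

Definition strongly_convex_on {R : realType} {n : nat} (l : R)
  (S : set 'rV[R]_n) (f : 'rV[R]_n -> R) : Prop :=
  forall x y, S x -> S y ->
    f x + dotv (grad f x) (y - x) + l / 2 * enorm (x - y) ^+ 2 <= f y.

Definition is_proj {R : realType} {n : nat} (S : set 'rV[R]_n)
  (w p : 'rV[R]_n) : Prop :=
  S p /\ forall y, S y -> enorm (p - w) ^+ 2 <= enorm (y - w) ^+ 2.

(* Main.v *)
Require Import Defs.
From HB Require Import structures.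
From mathcomp Require Import all_boot all_order all_algebra.
From mathcomp Require Import all_classical all_reals all_analysis.
From mathcomp Require Import ring lra.
Import Order.TTheory GRing.Theory Num.Theory.
Import numFieldNormedType.Exports.
Local Open Scope classical_set_scope.
Local Open Scope ring_scope.

Section H.
Variables (R : realType) (n : nat).
Implicit Types u v w : 'rV[R]_n.

Lemma dotv_ge0 u : 0 <= dotv u u.
Proof. by apply: sumr_ge0 => i _; rewrite -expr2 sqr_ge0. Qed.

Lemma enorm_sq u : enorm u ^+ 2 = dotv u u.
Proof. by rewrite /enorm sqr_sqrtr // dotv_ge0. Qed.

Lemma enorm_ge0 u : 0 <= enorm u.
Proof. exact: sqrtr_ge0. Qed.

Lemma lagrange u v : dotv u v ^+ 2 <= dotv u u * dotv v v.
Proof.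
rewrite -subr_ge0.
pose a i := u ord0 i; pose b i := v ord0 i.
have E : dotv u u * dotv v v - dotv u v ^+ 2 =
   \sum_i \sum_j (a i * a i * (b j * b j) - a i * b i * (a j * b j)).
  rewrite /dotv expr2 !big_distrl -sumrB; apply: eq_bigr => i _ /=.
  by rewrite !big_distrr -sumrB.
have E2 : 2 * (dotv u u * dotv v v - dotv u v ^+ 2) =
   \sum_i \sum_j (a i * b j - a j * b i) ^+ 2.
  rewrite E mulr2n mulrDl mul1r {2}exchange_big -big_split /=.
  apply: eq_bigr => i _; rewrite -big_split /=; apply: eq_bigr => j _; ring.
have : 0 <= 2 * (dotv u u * dotv v v - dotv u v ^+ 2).
  by rewrite E2; apply: sumr_ge0 => i _; apply: sumr_ge0 => j _; exact: sqr_ge0.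
by rewrite pmulr_rge0.
Qed.

Lemma cs u v : dotv u v <= enorm u * enorm v.
Proof.
case/orP: (le_total (dotv u v) 0) => h.
  by apply: le_trans h _; apply: mulr_ge0; apply: enorm_ge0.
rewrite -[leLHS]ger0_norm // -sqrtr_sqr /enorm -sqrtrM ?dotv_ge0 //.
by rewrite ler_sqrt ?lagrange // mulr_ge0 // dotv_ge0.
Qed.


Lemma dotvC u v : dotv u v = dotv v u.
Proof. by apply: eq_bigr => i _; rewrite mulrC. Qed.
Lemma dotvDl u v w : dotv (u + v) w = dotv u w + dotv v w.
Proof. by rewrite /dotv -big_split; apply: eq_bigr => i _; rewrite !mxE mulrDl. Qed.
Lemma dotvNl u w : dotv (- u) w = - dotv u w.
Proof. by rewrite /dotv -sumrN; apply: eq_bigr => i _; rewrite !mxE mulNr. Qed.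
Lemma dotvZl (c : R) u w : dotv (c *: u) w = c * dotv u w.
Proof. by rewrite /dotv big_distrr; apply: eq_bigr => i _; by rewrite !mxE /= mulrA. Qed.
Lemma dotvDr u v w : dotv w (u + v) = dotv w u + dotv w v.
Proof. by rewrite dotvC dotvDl !(dotvC w). Qed.
Lemma dotvNr u w : dotv w (- u) = - dotv w u.
Proof. by rewrite dotvC dotvNl dotvC. Qed.
Lemma dotvZr (c : R) u w : dotv w (c *: u) = c * dotv w u.
Proof. by rewrite dotvC dotvZl dotvC. Qed.

Definition dotvE := (dotvDl, dotvDr, dotvNl, dotvNr, dotvZl, dotvZr).

Lemma enormN u : enorm (- u) = enorm u.
Proof. by rewrite /enorm !dotvE opprK. Qed.

Lemma proj_le (S : set 'rV[R]_n) w p z : convex_set_rV S -> is_proj S w p -> S z ->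
  dotv (p - z) (p - z) <= dotv (w - z) (w - z).
Proof.
move=> cS [Sp pmin] Sz.
set c := dotv (p - w) (z - p); set e := dotv (z - p) (z - p).
have key : forall a : R, 0 <= a <= 1 -> 0 <= a * (2 * c + a * e).
  move=> a a01; have := pmin _ (cS _ _ a Sz Sp a01).
  rewrite !enorm_sq.
  have -> : a *: z + (1 - a) *: p - w = (p - w) + a *: (z - p).
    by apply/rowP => i; rewrite !mxE; ring.
  rewrite /c /e !dotvE ?(dotvC w p) ?(dotvC z p) ?(dotvC z w); nra.
have c0 : 0 <= c.
  rewrite leNgt; apply/negP => cn.
  have e0 : 0 <= e by apply: dotv_ge0.
  have d0 : 0 < - c + e by lra.
  pose a := - c / (- c + e).
  have a0 : 0 < a by rewrite divr_gt0 // oppr_gt0.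
  have a1 : a <= 1 by rewrite ler_pdivrMr // mul1r; lra.
  have ae : a * e <= - c.
    rewrite /a mulrAC ler_pdivrMr //.
    have : 0 <= - c * (- c) by rewrite mulr_ge0 // ltW // oppr_gt0.
    nra.
  have := key a; rewrite (ltW a0) a1 => /(_ isT).
  by rewrite pmulr_rge0 //; lra.
have := dotv_ge0 (w - p); move: c0.
rewrite /c !dotvE ?(dotvC w p) ?(dotvC z p) ?(dotvC z w); lra.
Qed.

Lemma exp_step (x y g : 'rV[R]_n) (c : R) :
  dotv (x - c *: g - y) (x - c *: g - y) =
  dotv (x - y) (x - y) + 2 * c * dotv g (y - x) + c ^+ 2 * dotv g g.
Proof.
rewrite !dotvE (dotvC x g) (dotvC y g) (dotvC y x); ring.
Qed.

Lemma exp_diff (th z1 z0 : 'rV[R]_n) :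
  dotv (th - z1) (th - z1) - dotv (th - z0) (th - z0) =
  dotv (z1 - z0) z1 + dotv (z1 - z0) z0 + 2 * dotv (z1 - z0) (- th).
Proof.
rewrite !dotvE (dotvC z1 th) (dotvC z0 th) (dotvC z0 z1); ring.
Qed.
End H.
Arguments dotv_ge0 {R n}.
Arguments enorm_sq {R n}.
Arguments enorm_ge0 {R n}.
Arguments lagrange {R n}.
Arguments cs {R n}.
Arguments dotvC {R n}.
Arguments dotvDl {R n}.
Arguments dotvNl {R n}.
Arguments dotvZl {R n}.
Arguments dotvDr {R n}.
Arguments dotvNr {R n}.
Arguments dotvZr {R n}.
Arguments enormN {R n}.
Arguments proj_le {R n}.
Arguments exp_step {R n}.
Arguments exp_diff {R n}.

Lemma tele (R : realType) (T : nat) (r p q a b d e : nat -> R) (C K : R) :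
 (forall t, (1 <= t <= T)%N -> r t <= p t * a t - q t * b t + K * e t) ->
 p 1%N * a 1%N = 0 ->
 (forall t, (1 <= t < T)%N -> p t.+1 * a t.+1 - q t * b t <= C * d t.+1) ->
 0 <= q T * b T ->
 \sum_(1 <= t < T.+1) r t <= C * \sum_(2 <= t < T.+1) d t + K * \sum_(1 <= t < T.+1) e t.
Proof.
case: T => [|k] H1 H2 H3 H4.
  by rewrite !big_geq // !mulr0 addr0.
suff inv : forall j, (j <= k)%N -> \sum_(1 <= t < j.+2) r t <=
    C * \sum_(2 <= t < j.+2) d t + K * \sum_(1 <= t < j.+2) e t - q j.+1 * b j.+1.
  by have := inv k (leqnn k); lra.
elim => [|j IH] hj.
  rewrite !big_nat1 big_geq // mulr0 add0r.
  by have := H1 1%N isT; rewrite H2; lra.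
rewrite !(big_nat_recr j.+2) //.
have h1 := H1 j.+2 hj.
have h3 := H3 j.+1 hj.
have := IH (ltnW hj).
rewrite /= !mulrDr; lra.
Qed.

Lemma alg1 (R : realType) (qq et x A gg : R) : qq * (A + 2*et*x + et^+2*gg) =
  qq*A + (qq*(2*et))*x + (qq*(2*et))*(et/2*gg).
Proof. by field. Qed.

Lemma alg2 (R : realType) (e G : R) : e / 2 * G = G / 2 * e.
Proof. by field. Qed.

Theorem theorem3p6 (R : realType) (n T : nat) (S : set 'rV[R]_n)
  (D G l gamma V : R)
  (f : nat -> 'rV[R]_n -> R) (theta z : nat -> 'rV[R]_n) :
  compact S -> convex_set_rV S ->
  (forall x, S x -> enorm x <= D) ->
  0 < l ->
  (forall t, (1 <= t <= T)%N ->
     (forall x, S x -> differentiable (f t) x) /\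
     strongly_convex_on l S (f t) /\
     (forall x, S x -> enorm (grad (f t) x) <= G)) ->
  0 < gamma < 1 ->
  S (theta 1%N) ->
  (forall t, (1 <= t < T)%N ->
     is_proj S (theta t - ((1 - gamma) / (l * (1 - gamma ^+ t))) *: grad (f t) (theta t))
       (theta t.+1)) ->
  (forall t, (1 <= t <= T)%N -> S (z t)) ->
  \sum_(2 <= t < T.+1) enorm (z t - z t.-1) <= V ->
  \sum_(1 <= t < T.+1) (f t (theta t) - f t (z t)) <=
    (2 * D * l) / (1 - gamma) * V +
    G ^+ 2 / 2 * \sum_(1 <= t < T.+1) ((1 - gamma) / (l * (1 - gamma ^+ t))).
Proof.
move=> _ cS SD l0 Hf /andP[g0 g1] S1 Hp Sz HV.
set eta : nat -> R := fun t : nat => (1 - gamma) / (l * (1 - gamma ^+ t)).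
set q : nat -> R := fun t : nat => l * (1 - gamma ^+ t) / (2 * (1 - gamma)).
set p : nat -> R := fun t : nat => q t - l / 2.
set a : nat -> R := fun t : nat => dotv (theta t - z t) (theta t - z t).
set b : nat -> R := fun t : nat => if (t < T)%N then dotv (theta t.+1 - z t) (theta t.+1 - z t) else 0.
set d : nat -> R := fun t : nat => enorm (z t - z t.-1).
set C : R := 2 * D * l / (1 - gamma).
have Sth : forall t, (1 <= t <= T)%N -> S (theta t).
  elim => [//|[|t] IH] ht //.
  by case: (Hp t.+1 ht).
have D0 : 0 <= D by apply: le_trans (SD _ S1); apply: enorm_ge0.
have gm1 : 0 < 1 - gamma by lra.
have gt1 : forall t, (0 < t)%N -> 0 < 1 - gamma ^+ t.
  by move=> t t0; rewrite subr_gt0 exprn_ilt1 ?ltW // -lt0n.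
have gt0 : forall t, 0 <= gamma ^+ t by move=> t; rewrite exprn_ge0 // ltW.
have qeta : forall t, (0 < t)%N -> q t * (2 * eta t) = 1.
  move=> t t0; have := gt1 t t0; rewrite /q /eta => h; field.
  by rewrite (gt_eqF h) (gt_eqF l0) (gt_eqF gm1).
have eta0 : forall t, (0 < t)%N -> 0 < eta t.
  by move=> t t0; rewrite /eta divr_gt0 // mulr_gt0 // gt1.
have q0 : forall t, (0 < t)%N -> 0 <= q t.
  by move=> t t0; rewrite /q divr_ge0 ?mulr_ge0 ?ltW ?gt1 //; lra.
have qle : forall t, q t <= l / (2 * (1 - gamma)).
  move=> t; rewrite /q ler_pM2r ?invr_gt0 ?mulr_gt0 //.
  rewrite ger_pMr //; have := gt0 t; lra.
have p1 : p 1%N = 0.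
  rewrite /p /q expr1; field; rewrite (gt_eqF gm1); done.
have pS : forall t, p t.+1 = gamma * q t.
  move=> t; rewrite /p /q exprS; field; rewrite (gt_eqF gm1); done.
apply: le_trans (_ : C * \sum_(2 <= t < T.+1) d t +
   G ^+ 2 / 2 * \sum_(1 <= t < T.+1) eta t <= _); last first.
  rewrite lerD2r ler_wpM2l //.
  apply: divr_ge0; last exact: ltW gm1.
  by rewrite !mulr_ge0 // ltW.
apply: (@tele R T _ p q a b d eta C (G ^+ 2 / 2)).
- move=> t ht; have [_ [sc gb]] := Hf t ht.
  have t0 : (0 < t)%N by case/andP: ht.
  set g := grad (f t) (theta t).
  have h1 := sc _ _ (Sth t ht) (Sz t ht); rewrite -/g enorm_sq -/(a t) in h1.
  set w := theta t - eta t *: g.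
  have hb : b t <= dotv (w - z t) (w - z t).
    rewrite /b; case: ifP => tT; last exact: dotv_ge0.
    apply: proj_le cS (Hp t _) (Sz t ht).
    by rewrite t0.
  have hw : dotv (w - z t) (w - z t) =
      a t + 2 * eta t * dotv g (z t - theta t) + eta t ^+ 2 * dotv g g.
    by rewrite /w exp_step.
  have hg : dotv g g <= G ^+ 2.
    rewrite -enorm_sq; have := gb _ (Sth t ht); have := enorm_ge0 g; rewrite -/g.
    nra.
  have := qeta t t0; have := eta0 t t0; have := q0 t t0.
  rewrite /p.
  set x := dotv g (z t - theta t).
  set qq := q t; set et := eta t.
  move=> qq0 et0 qe.
  have hqb : qq * b t <= qq * (a t + 2 * et * x + et ^+ 2 * dotv g g).
    by rewrite -hw ler_wpM2l.
  have e1 : qq * (a t + 2 * et * x + et ^+ 2 * dotv g g) = qq * a t + x + et / 2 * dotv g g.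
    have -> : qq * (a t + 2 * et * x + et ^+ 2 * dotv g g) =
       qq * a t + (qq * (2 * et)) * x + (qq * (2 * et)) * (et / 2 * dotv g g) by apply: alg1.
    by rewrite qe !mul1r.
  have h3 : et / 2 * dotv g g <= et / 2 * G ^+ 2 by rewrite ler_wpM2l // divr_ge0 // ltW.
  have h4 : et / 2 * G ^+ 2 = G ^+ 2 / 2 * et by apply: alg2.
  rewrite mulrBl; rewrite -/x in h1; lra.
- by rewrite p1 mul0r.
- move=> t /andP[t0 tT].
  have ht : (1 <= t <= T)%N by rewrite t0 ltnW.
  have tT2 : (1 <= t < T)%N by rewrite t0.
  have [Sth1 _] := Hp t tT2.
  rewrite pS /b tT /a /d /=.
  set th := theta t.+1; set z1 := z t.+1; set z0 := z t.
  set dd := z1 - z0.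
  have hab : dotv (th - z1) (th - z1) - dotv (th - z0) (th - z0) =
     dotv dd z1 + dotv dd z0 + 2 * dotv dd (- th).
    exact: exp_diff.
  have ht1 : (1 <= t.+1 <= T)%N by rewrite tT.
  have c1 : dotv dd z1 <= enorm dd * D.
    apply: le_trans (cs _ _) _; rewrite ler_wpM2l ?enorm_ge0 //; exact: SD (Sz _ ht1).
  have c2 : dotv dd z0 <= enorm dd * D.
    apply: le_trans (cs _ _) _; rewrite ler_wpM2l ?enorm_ge0 //; exact: SD (Sz _ ht).
  have c3 : dotv dd (- th) <= enorm dd * D.
    apply: le_trans (cs _ _) _; rewrite enormN ler_wpM2l ?enorm_ge0 //; exact: SD.
  have a0 := dotv_ge0 (th - z1).
  have qt0 := q0 t t0.
  have qt1 := qle t.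
  set A := dotv (th - z1) (th - z1) in hab a0 *.
  set B := dotv (th - z0) (th - z0) in hab *.
  set E := enorm dd in c1 c2 c3 *.
  rewrite (mulrC E) in c1 c2 c3.
  have E0 : 0 <= E by apply: enorm_ge0.
  have s1 : gamma * q t * A <= q t * A by rewrite ler_wpM2r // ?mulr_ge0 // ler_piMl // ltW.
  have s2 : q t * (A - B) <= q t * (4 * D * E).
    by rewrite ler_wpM2l //; lra.
  have s3 : q t * (4 * D * E) <= l / (2 * (1 - gamma)) * (4 * D * E).
    by rewrite ler_wpM2r // !mulr_ge0.
  have -> : C * E = l / (2 * (1 - gamma)) * (4 * D * E).
    rewrite /C; field; rewrite (gt_eqF gm1); done.
  have : q t * (A - B) = q t * A - q t * B by ring.
  lra.
- by rewrite /b ltnn mulr0.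
Qed.
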